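(* For every admissible Betti function $b:\operatorname{int}\mathbb{M}\to\mathbb{N}_0$, the direct sum $\bigoplus_{v\in\operatorname{int}\mathbb{M}}B_v^{b(v)}:\mathbb{M}^{\circ}\to\mathrm{Vect}_{\mathbb{F}}$ lies in $\mathcal{J}$; in particular it is pointwise finite-dimensional and coincides with the product $\prod_{v}B_v^{b(v)}$.
   Context: Fix a field $\mathbb{F}$. Equip $\mathbb{R}^2$ with the partial order $(x,y)\preceq(x',y')$ iff $x'\le x$ and $y\le y'$. Fix reals $a<b$, let $l_0=\{x+y=a\}$, $l_1=\{x+y=b\}$, $\mathbb{M}=\{(x,y): a\le x+y\le b\}$, $\partial\mathbb{M}=l_0\cup l_1$, $\operatorname{int}\mathbb{M}=\mathbb{M}\setminus\partial\mathbb{M}$, and $T:\mathbb{M}\to\mathbb{M}$, $T(x,y)=(a-y,b-x)$. For $u\in\mathbb{M}$, ${\uparrow}u=\{v:u\preceq v\}$, ${\downarrow}u=\{v:v\preceq u\}$; $\operatorname{int}$ of a subset is its interior in $\mathbb{M}$. Functors $\mathbb{M}^{\circ}\to\mathrm{Vect}_{\mathbb{F}}$ are contravariant in $\preceq$. For $v\in\operatorname{int}\mathbb{M}$, $B_v$ is the functor with $B_v(u)=\mathbb{F}$ if $u\in({\downarrow}v)\cap\operatorname{int}({\uparrow}T^{-1}(v))$ and $0$ otherwise, internal maps identity when domain and codomain are $\mathbb{F}$ and zero otherwise. A functor $G$ vanishing on $\partial\mathbb{M}$ is cohomological if for every axis-aligned rectangle in $\mathbb{M}$ with one corner on $l_1$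 and remaining corners $u\preceq v\preceq w$, applying $G$ to the chain $\cdots\preceq T^{-1}(v)\preceq T^{-1}(w)\preceq u\preceq v\preceq w\preceq T(u)\preceq T(v)\preceq\cdots$ gives an exact sequence. $G$ is sequentially continuous if $G(u)\to\varprojlim_kG(u_k)$ is an isomorphism for every $\preceq$-increasing sequence $u_k\to u$. $\mathcal{J}$ is the full subcategory of pointwise finite-dimensional, cohomological, sequentially continuous functors with support contained in some ${\downarrow}w$. A function $b:\operatorname{int}\mathbb{M}\to\mathbb{N}_0$ is an admissible Betti function if its support is contained in ${\downarrow}w$ for some $w\in\mathbb{M}$ and $\sum_{v\in({\uparrow}u)\cap\operatorname{int}({\downarrow}T(u))}b(v)<\infty$ for every $u\in\operatorname{int}\mathbb{M}$. *)

(* Defs.v *)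
From HB Require Import structures.
From mathcomp Require Import all_boot all_order all_algebra.
From mathcomp Require Import all_classical all_reals.
From mathcomp Require Import topology normedtype sequences esum.

Set Implicit Arguments.
Unset Strict Implicit.
Unset Printing Implicit Defensive.

Import Order.TTheory GRing.Theory Num.Theory.
Import numFieldNormedType.Exports.
Local Open Scope classical_set_scope.
Local Open Scope ring_scope.

Section Geometry.
Variable R : realType.
Variables a b : R.

Definition pt := (R * R)%type.

Definition ple (p q : pt) : Prop := q.1 <= p.1 /\ p.2 <= q.2.

Definition inM (p : pt) : Prop := a <= p.1 + p.2 <= b.
Definition bdM (p : pt) : Prop := p.1 + p.2 = a \/ p.1 + p.2 = b.
Definition intM (p : pt) : Prop := a < p.1 + p.2 < b.

Definition Tm (p : pt) : pt := (a - p.2, b - p.1).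
Definition Tinv (p : pt) : pt := (b - p.2, a - p.1).

Definition Tpow (k : int) (p : pt) : pt :=
  match k with
  | Posz n => iter n Tm p
  | Negz n => iter n.+1 Tinv p
  end.

Definition upset (u : pt) : set pt := [set v | inM v /\ ple u v].
Definition downset (u : pt) : set pt := [set v | inM v /\ ple v u].

(* interior of A (a subset of M) relative to M (topology of R^2 restricted
   to M; the max-metric induces the usual topology of R^2) *)
Definition relintM (A : set pt) : set pt :=
  [set q | A q /\ exists2 e : R, 0 < e &
     forall r, inM r -> `|r.1 - q.1| < e -> `|r.2 - q.2| < e -> A r].

Definition Bsupp (v : pt) : set pt := downset v `&` relintM (upset (Tinv v)).

(* the chain ... T^-1 v <= T^-1 w <= u <= v <= w <= T u <= T v <= ...,
   indexed by the integers, position 0 being u *)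
Definition chainpt (u v w : pt) (n : int) : pt :=
  let r := (n %% 3)%Z in
  Tpow (n %/ 3)%Z (if r == 0 then u else if r == 1 then v else w).

End Geometry.

(* Functors M^op -> Vect_F (contravariant in ⪯)                          *)

Record pmod (F : fieldType) (R : realType) := PMod {
  pobj : pt R -> lmodType F;
  pmor : forall u v : pt R, pobj v -> pobj u
}.
Arguments pobj {F R}.
Arguments pmor {F R}.

Section FunctorProps.
Variables (F : fieldType) (R : realType) (a b : R).
Implicit Types G : pmod F R.

Definition lin_map (V W : lmodType F) (f : V -> W) : Prop :=
  forall (k : F) (x y : V), f (k *: x + y) = k *: f x + f y.

Definition is_functor G : Prop :=
  (forall u v, inM a b u -> inM a b v -> ple u v -> lin_map (pmor G u v)) /\
  (forall u, inM a b u -> forall x, pmor G u u x = x) /\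
  (forall u v w, inM a b u -> inM a b v -> inM a b w -> ple u v -> ple v w ->
     forall x, pmor G u w x = pmor G u v (pmor G v w x)).

Definition trivial_space (V : lmodType F) : Prop := forall x : V, x = 0.

Definition findim (V : lmodType F) : Prop :=
  exists n (e : 'I_n -> V), forall x, exists c : 'I_n -> F,
    x = \sum_(i < n) c i *: e i.

Definition pfd G : Prop := forall u, inM a b u -> findim (pobj G u).

Definition vanishes_on G (A : set (pt R)) : Prop :=
  forall u, A u -> trivial_space (pobj G u).

Definition exact_at G (c : int -> pt R) (n : int) : Prop :=
  forall y : pobj G (c n),
    pmor G (c (n - 1)) (c n) y = 0 <-> exists x, pmor G (c n) (c (n + 1)) x = y.

(* axis-aligned rectangle [x1,x2] x [y1,y2] in M with corner (x2,y2) on l1;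
   remaining corners u = (x2,y1) ⪯ v = (x1,y1) ⪯ w = (x1,y2) *)
Definition cohomological G : Prop :=
  vanishes_on G (bdM a b) /\
  forall x1 x2 y1 y2 : R, x1 < x2 -> y1 < y2 ->
    a <= x1 + y1 -> x2 + y2 = b ->
    forall n, exact_at G (chainpt a b (x2, y1) (x1, y1) (x1, y2)) n.

Definition seq_continuous G : Prop :=
  forall (s : nat -> pt R) (u : pt R),
    inM a b u -> (forall k, inM a b (s k)) -> (forall k, ple (s k) (s k.+1)) ->
    ((fun k => (s k).1) @ \oo --> u.1) -> ((fun k => (s k).2) @ \oo --> u.2) ->
    (* G(u) -> lim_k G(s k) is an isomorphism (it is linear by functoriality) *)
    (forall x : pobj G u, (forall k, pmor G (s k) u x = 0) -> x = 0) /\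
    (forall y : forall k, pobj G (s k),
       (forall k, pmor G (s k) (s k.+1) (y k.+1) = y k) ->
       exists x : pobj G u, forall k, pmor G (s k) u x = y k).

Definition bounded_support G : Prop :=
  exists w, inM a b w /\
    forall u, inM a b u -> ~ ple u w -> trivial_space (pobj G u).

Definition inJ G : Prop :=
  [/\ is_functor G, pfd G, cohomological G, seq_continuous G & bounded_support G].

End FunctorProps.

Definition admissible (R : realType) (a b : R) (bet : pt R -> nat) : Prop :=
  (exists w, inM a b w /\ forall v, intM a b v -> bet v <> 0%N -> ple v w) /\
  (forall u, intM a b u ->
     (\esum_(v in [set v | intM a b v /\ upset a b u v /\
                          relintM a b (downset a b (Tm a b u)) v])
        ((bet v)%:R : R)%:E < +oo)%E).

(* An element at u is a family indexed by pairs (v,i), i < b(v), with     *)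
(* v in int M and u in supp B_v; direct sum = finitely supported.         *)
Section DirectSum.
Variables (F : fieldType) (R : realType) (a b : R) (bet : pt R -> nat).

Definition Bidx (u : pt R) (p : pt R * nat) : Prop :=
  intM a b p.1 /\ (p.2 < bet p.1)%N /\ Bsupp a b p.1 u.

Definition prod_pred (u : pt R) : {pred (pt R * nat -> F^o)} :=
  fun f => `[< forall p, f p != 0 -> Bidx u p >].

Definition sum_pred (u : pt R) : {pred (pt R * nat -> F^o)} :=
  fun f => `[< finite_set [set p | f p != 0] >] && (f \in prod_pred u).

Lemma prod_pred_closed u : subsemimod_closed (prod_pred u).
Proof.
split; [split|].
- by apply/asboolP => p; rewrite (_ : (0 : pt R * nat -> F^o) p = 0) // eqxx.
- move=> f g /asboolP Hf /asboolP Hg; apply/asboolP => p.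
  rewrite (_ : (f + g) p = f p + g p) //.
  have [/Hf//|/negPn/eqP f0] := boolP (f p != 0).
  by rewrite f0 add0r => /Hg.
- move=> k f /asboolP Hf; apply/asboolP => p.
  rewrite (_ : (k *: f) p = k *: f p) //.
  have [/Hf//|/negPn/eqP f0] := boolP (f p != 0).
  by rewrite f0 scaler0 eqxx.
Qed.

Lemma sum_pred_closed u : subsemimod_closed (sum_pred u).
Proof.
have [[P0 PD] PZ] := prod_pred_closed u.
split; [split|].
- apply/andP; split; last exact: P0.
  apply/asboolP.
  rewrite (_ : [set _ | _] = set0) //; apply/seteqP; split=> p //=.
  by rewrite (_ : (0 : pt R * nat -> F^o) p = 0) // eqxx.
- move=> f g /andP[/asboolP Ff Pf] /andP[/asboolP Fg Pg].
  apply/andP; split; last exact: PD.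
  apply/asboolP.
  have FU : finite_set ([set p | f p != 0] `|` [set p | g p != 0]).
    by rewrite finite_setU.
  apply: (sub_finite_set _ FU) => p /=.
  rewrite (_ : (f + g) p = f p + g p) //.
  have [//|/negPn/eqP f0] := boolP (f p != 0); first by left.
  by rewrite f0 add0r => ?; right.
- move=> k f /andP[/asboolP Ff Pf].
  apply/andP; split; last exact: PZ.
  apply/asboolP.
  apply: (sub_finite_set _ Ff) => p /=.
  rewrite (_ : (k *: f) p = k *: f p) //.
  have [//|/negPn/eqP f0] := boolP (f p != 0).
  by rewrite f0 scaler0 eqxx.
Qed.

HB.instance Definition _ u :=
  GRing.isSubSemiModClosed.Build F (pt R * nat -> F^o) (prod_pred u)
    (prod_pred_closed u).
HB.instance Definition _ u :=
  GRing.isSubSemiModClosed.Build F (pt R * nat -> F^o) (sum_pred u)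
    (sum_pred_closed u).

Record DSum (u : pt R) := MkDSum {
  dsval : pt R * nat -> F^o;
  dsvalP : dsval \in sum_pred u }.
HB.instance Definition _ u := [isSub for @dsval u].
HB.instance Definition _ u := [Choice of DSum u by <:].
HB.instance Definition _ u := [SubChoice_isSubLmodule of DSum u by <:].

Record DProd (u : pt R) := MkDProd {
  dpval : pt R * nat -> F^o;
  dpvalP : dpval \in prod_pred u }.
HB.instance Definition _ u := [isSub for @dpval u].
HB.instance Definition _ u := [Choice of DProd u by <:].
HB.instance Definition _ u := [SubChoice_isSubLmodule of DProd u by <:].

(* internal map for u ⪯ u': on the (v,i) summand it is the identity when
   u, u' are both in supp B_v and zero otherwise *)
Definition restrict (u : pt R) (f : pt R * nat -> F^o) : pt R * nat -> F^o :=
  fun p => if `[< Bsupp a b p.1 u >] then f p else 0.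

Definition dsum_mor (u u' : pt R) (f : DSum u') : DSum u :=
  insubd (0 : DSum u) (restrict u (val f)).

Definition BettiSum : pmod F R := @PMod F R (fun u => (DSum u : lmodType F)) dsum_mor.

Definition sum_to_prod (u : pt R) (f : DSum u) : DProd u :=
  insubd (0 : DProd u) (val f).

End DirectSum.

(* Main.v *)
From Pilot Require Import Defs.
From HB Require Import structures.
From mathcomp Require Import all_boot all_order all_algebra.
From mathcomp Require Import all_classical all_reals.
From mathcomp Require Import topology normedtype sequences esum.
From mathcomp Require Import finmap ring lra zify.
Import Order.TTheory GRing.Theory Num.Theory.
Import numFieldNormedType.Exports.
Local Open Scope classical_set_scope.
Local Open Scope ring_scope.

Section Geo.
Variables (R : realType) (a b : R).

Lemma Bsupp_iff (v q : pt R) : Bsupp a b v q <->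
  [/\ inM a b q, v.1 <= q.1, q.1 < b - v.2, a - v.1 < q.2 & q.2 <= v.2].
Proof.
rewrite /Bsupp /downset /relintM /upset /ple /Tinv /=; split.
- move=> [[Mq [h1 h2]] [[_ [h3 h4]] [e e0 He]]].
  have Mr : inM a b (q.1 + e / 2, q.2 - e / 2).
    rewrite /inM /= (_ : q.1 + e / 2 + (q.2 - e / 2) = q.1 + q.2) //.
    ring.
  have e2 : 0 < e / 2 by rewrite divr_gt0.
  have e2e : e / 2 < e by rewrite ltr_pdivrMr // ltr_pMr // ltr1n.
  have n1 : `|(q.1 + e / 2, q.2 - e / 2).1 - q.1| < e.
    by rewrite /= addrAC subrr add0r ger0_norm // ltW.
  have n2 : `|(q.1 + e / 2, q.2 - e / 2).2 - q.2| < e.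
    by rewrite /= addrAC subrr add0r normrN ger0_norm // ltW.
  have [_ [/= k1 k2]] := He _ Mr n1 n2.
  split => //; lra.
- move=> [Mq h1 h2 h3 h4]; split; first by split => //.
  split; first by split => //; split; lra.
  exists (Num.min (b - v.2 - q.1) (q.2 - (a - v.1))).
    by rewrite lt_min; apply/andP; split; lra.
  move=> r Mr; rewrite !lt_min => /andP[r1 _] /andP[_ r2]; split => //; split.
    move: r1; rewrite ltr_norml => /andP[_]; lra.
  move: r2; rewrite ltr_norml => /andP[+ _]; lra.
Qed.


Lemma BsuppE (v q : pt R) : Bsupp a b v q <->
  (a <= q.1 + q.2 /\ q.1 + q.2 <= b /\ v.1 <= q.1 /\ q.1 < b - v.2 /\
   a - v.1 < q.2 /\ q.2 <= v.2).
Proof.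
rewrite Bsupp_iff /inM; split.
  by move=> [/andP[? ?] ? ? ? ?].
by move=> [? [? [? [? [? ?]]]]]; split => //; apply/andP.
Qed.

Lemma Bsupp_int v q : Bsupp a b v q -> intM a b q.
Proof. move/BsuppE => [? [? [? [? [? ?]]]]]; rewrite /intM; apply/andP; split; lra. Qed.

Lemma Bsupp_Tm v q : Bsupp a b v (Tm a b q) <-> Bsupp a b (Tinv a b v) q.
Proof.
rewrite !BsuppE /Tm /Tinv /=; split.
  by move=> [? [? [? [? [? ?]]]]]; do !split; lra.
by move=> [? [? [? [? [? ?]]]]]; do !split; lra.
Qed.

Lemma Bsupp_Tinv v q : Bsupp a b v (Tinv a b q) <-> Bsupp a b (Tm a b v) q.
Proof.
rewrite !BsuppE /Tm /Tinv /=; split.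
  by move=> [? [? [? [? [? ?]]]]]; do !split; lra.
by move=> [? [? [? [? [? ?]]]]]; do !split; lra.
Qed.

Lemma Bsupp_conv v q1 q2 q3 : Bsupp a b v q1 -> Bsupp a b v q3 ->
  ple q1 q2 -> ple q2 q3 -> Bsupp a b v q2.
Proof.
rewrite !BsuppE /ple.
by move=> [? [? [? [? [? ?]]]]] [? [? [? [? [? ?]]]]] [? ?] [? ?]; do !split; lra.
Qed.

Lemma Tpow_supp (k : int) v : exists v', forall q,
  Bsupp a b v (Tpow a b k q) <-> Bsupp a b v' q.
Proof.
have gen : forall (f g : pt R -> pt R), (forall v q, Bsupp a b v (f q) <-> Bsupp a b (g v) q) ->
  forall n v, exists v', forall q, Bsupp a b v (iter n f q) <-> Bsupp a b v' q.
  move=> f g Hfg; elim => [|n IH] w; first by exists w.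
  have [v1 Hv1] := IH w.
  by exists (g v1) => q; rewrite iterSr Hv1 Hfg.
case: k => n /=; first exact: (gen _ _ Bsupp_Tm n v).
exact: (gen _ _ Bsupp_Tinv n.+1 v).
Qed.

Lemma Tpow_succ (k : int) q : Tpow a b (k + 1) q = Tpow a b k (Tm a b q).
Proof.
have TK : forall x, Tinv a b (Tm a b x) = x.
  by case=> x y; rewrite /Tinv /Tm /=; congr (_, _); ring.
case: k => n.
  rewrite (_ : _ + 1 = Posz n.+1); last by lia.
  by rewrite /= -iterSr.
case: n => [|n].
  rewrite (_ : _ + 1 = Posz 0); last by lia.
  by rewrite /= TK.
rewrite (_ : _ + 1 = Negz n); last by lia.
by rewrite /Tpow [in RHS]iterSr TK.
Qed.

Definition Good (p q1 q2 q3 : pt R) :=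
  ~ (Bsupp a b p q1 /\ Bsupp a b p q2 /\ Bsupp a b p q3) /\
  (Bsupp a b p q2 -> ~ Bsupp a b p q1 -> Bsupp a b p q3).

Lemma Good_Tpow q1 q2 q3 : (forall p, Good p q1 q2 q3) ->
  forall k p, Good p (Tpow a b k q1) (Tpow a b k q2) (Tpow a b k q3).
Proof.
move=> H k p; have [p' Hp'] := Tpow_supp k p.
by rewrite /Good !Hp'; exact: H.
Qed.

Ltac solveneg nS :=
  first [clear nS; lra | (rewrite leNgt || rewrite ltNge); apply/negP => ?; apply: nS;
    do !split; lra].

Lemma base_all (x1 x2 y1 y2 : R) (p : pt R) : x1 < x2 -> y1 < y2 -> a <= x1 + y1 -> x2 + y2 = b ->
  [/\ Good p (x2, y1) (x1, y1) (x1, y2),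
      Good p (x1, y1) (x1, y2) (Tm a b (x2, y1)) &
      Good p (x1, y2) (Tm a b (x2, y1)) (Tm a b (x1, y1))].
Proof.
move=> h12 hy ha hb.
have hb1 : x2 + y2 <= b by rewrite hb.
have hb2 : b <= x2 + y2 by rewrite hb.
clear hb.
split; (split; [
  rewrite !BsuppE /= => -[[? [? [? [? [? ?]]]]] [[? [? [? [? [? ?]]]]] [? [? [? [? [? ?]]]]]]];
  suff : (0:R) < 0 by rewrite ltxx |
  rewrite !BsuppE /= => -[? [? [? [? [? ?]]]]] nS; do !split]).
all: try solveneg nS.
all: lra.
Qed.

Lemma chain3 (u v w : pt R) (k : int) (r : nat) : (r < 3)%N ->
  chainpt a b u v w (k * 3 + r%:Z) =
  Tpow a b k (if r == 0%N then u else if r == 1%N then v else w).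
Proof.
move=> hr; rewrite /chainpt divzMDl // modzMDl.
by case: r hr => [|[|[|]]] //= _; rewrite addr0.
Qed.

Lemma chain_good (x1 x2 y1 y2 : R) (p : pt R) : x1 < x2 -> y1 < y2 -> a <= x1 + y1 ->
  x2 + y2 = b -> forall n,
  Good p (chainpt a b (x2, y1) (x1, y1) (x1, y2) (n - 1))
         (chainpt a b (x2, y1) (x1, y1) (x1, y2) n)
         (chainpt a b (x2, y1) (x1, y1) (x1, y2) (n + 1)).
Proof.
move=> h12 hy ha hb n.
have B := fun p => base_all x1 x2 y1 y2 p h12 hy ha hb.
have [k [r [hr ->]]] : exists k (r : nat), (r < 3)%N /\ n = k * 3 + r%:Z.
  exists (n %/ 3)%Z; have := modz_ge0 n (isT : (3:int) != 0).
  have := ltz_mod n (isT : (3:int) != 0).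
  case E: (n %% 3)%Z => [m|m] // hm _; exists m; split; first by [].
  by rewrite {1}(divz_eq n 3) E.
case: r hr => [|[|[|r]]] // _.
- have [j ->] : exists j, k = j + 1 by exists (k - 1); lia.
  rewrite (_ : (j + 1) * 3 + 0%N%:Z - 1 = j * 3 + 2%N%:Z); last by lia.
  rewrite (_ : (j + 1) * 3 + 0%N%:Z + 1 = (j + 1) * 3 + 1%N%:Z); last by lia.
  rewrite !chain3 //= !Tpow_succ.
  by apply: Good_Tpow => p'; case: (B p').
- rewrite (_ : k * 3 + 1%N%:Z - 1 = k * 3 + 0%N%:Z); last by lia.
  rewrite (_ : k * 3 + 1%N%:Z + 1 = k * 3 + 2%N%:Z); last by lia.
  rewrite !chain3 //=.
  by apply: Good_Tpow => p'; case: (B p').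
- rewrite (_ : k * 3 + 2%N%:Z - 1 = k * 3 + 1%N%:Z); last by lia.
  rewrite (_ : k * 3 + 2%N%:Z + 1 = (k + 1) * 3 + 0%N%:Z); last by lia.
  rewrite !chain3 //= !Tpow_succ.
  by apply: Good_Tpow => p'; case: (B p').
Qed.

End Geo.

Lemma esum_nat_finite (R : realType) (T : choiceType) (D : set T) (g : T -> nat) :
  (\esum_(v in D) ((g v)%:R : R)%:E < +oo)%E ->
  finite_set (D `&` [set v | g v != 0%N]).
Proof.
move=> Hlt; apply: contrapT => Hinf.
have Hge : forall n : nat, ((n%:R : R)%:E <= \esum_(v in D) ((g v)%:R : R)%:E)%E.
  move=> n; have [B BA Bn] := infinite_set_fset n Hinf.
  apply: esum_ge; exists [set` B].
    split; first exact: finite_fset.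
    by move=> x /BA [].
  rewrite -fsbig_seq //= sumEFin lee_fin -natr_sum ler_nat.
  apply: (leq_trans Bn); rewrite -sum1_size.
  rewrite big_seq_cond [X in (_ <= X)%N]big_seq_cond; apply: leq_sum => i /andP[iB _].
  by have [_ /=] := BA i iB; rewrite lt0n.
have H0 : (0 <= \esum_(v in D) ((g v)%:R : R)%:E)%E by apply: esum_ge0 => v _; rewrite lee_fin.
move: Hlt H0 Hge; case: (\esum_(v in D) _) => [r| |] // _ _ Hge.
have := Hge (Num.truncn r).+1; rewrite lee_fin => H.
by have := truncnS_gt r; rewrite ltNge H.
Qed.

Lemma ev_lt (R : realType) (f : nat -> R) (l : R) : f @ \oo --> l -> forall z : R, l < z ->
  exists N, forall n, (N <= n)%N -> f n < z.
Proof.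
move=> H z lz; have := cvgr_lt l H z lz; case => N _ HN; exists N => n Nn; exact: HN.
Qed.

Lemma ev_gt (R : realType) (f : nat -> R) (l : R) : f @ \oo --> l -> forall z : R, z < l ->
  exists N, forall n, (N <= n)%N -> z < f n.
Proof.
move=> H z lz; have := cvgr_gt l H z lz; case => N _ HN; exists N => n Nn; exact: HN.
Qed.

Lemma dec_ge (R : realType) (f : nat -> R) (l : R) : f @ \oo --> l ->
  {homo f : n m / (n <= m)%N >-> m <= n} -> forall n, l <= f n.
Proof.
move=> H hf n; have := nonincreasing_cvgn_ge hf (cvgP _ H) n; by rewrite (cvg_lim _ H).
Qed.

Lemma inc_le (R : realType) (f : nat -> R) (l : R) : f @ \oo --> l ->
  {homo f : n m / (n <= m)%N >-> n <= m} -> forall n, f n <= l.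
Proof.
move=> H hf n; have := nondecreasing_cvgn_le hf (cvgP _ H) n; by rewrite (cvg_lim _ H).
Qed.

Arguments ev_lt {R f l}.
Arguments ev_gt {R f l}.
Arguments dec_ge {R f l}.
Arguments inc_le {R f l}.

Section Alg.
Variables (F : fieldType) (R : realType) (a b : R) (bet : pt R -> nat).
Local Notation DS := (DSum F a b bet).

Lemma supp_Bidx {u} {f : DS u} {p} : val f p != 0 -> Bidx a b bet u p.
Proof.
case: f => f /= /andP[_]; rewrite unfold_in => /asboolP; exact.
Qed.

Lemma supp_fin {u} (f : DS u) : finite_set [set p | val f p != 0].
Proof. by case: f => f /= /andP[/asboolP]. Qed.

Lemma restrict_sum u {u'} (f : DS u') : Pilot.Defs.restrict a b u (val f) \in sum_pred a b bet u.
Proof.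
apply/andP; split.
  apply/asboolP; apply: (sub_finite_set _ (supp_fin f)) => p /=.
  by rewrite /Pilot.Defs.restrict; case: asboolP => // _; rewrite eqxx.
rewrite unfold_in; apply/asboolP => p; rewrite /Pilot.Defs.restrict.
case: asboolP => [Hs|]; last by rewrite eqxx.
by move=> H0; have [? [? _]] := supp_Bidx H0.
Qed.

Lemma val_mor u {u'} (f : DS u') : dsval (dsum_mor u f) = Pilot.Defs.restrict a b u (val f).
Proof. by rewrite /dsum_mor insubdK // restrict_sum. Qed.

Lemma DS_ext {u} (x y : DS u) : (forall p, val x p = val y p) -> x = y.
Proof. by move=> H; apply: val_inj; apply: funext. Qed.

Lemma Bsupp_conv' v q1 q2 q3 : Bsupp a b v q1 -> Bsupp a b v q3 ->
  ple q1 q2 -> ple q2 q3 -> inM a b q2 -> Bsupp a b v q2.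
Proof. by move=> h1 h3 h12 h23 _; exact: (@Bsupp_conv R a b _ _ _ _ h1 h3 h12 h23). Qed.

Lemma fevalE (f g : pt R * nat -> F^o) (k : F) p : (k *: f + g) p = k * f p + g p.
Proof. by []. Qed.

Lemma functor_ok : is_functor a b (BettiSum F a b bet).
Proof.
split; [|split].
- move=> u v _ _ _ k x y; apply: DS_ext => p /=.
  rewrite !val_mor /Pilot.Defs.restrict /= !fevalE.
  by case: asboolP => _ //=; rewrite mulr0 addr0.
- move=> u _ x; apply: DS_ext => p /=.
  rewrite val_mor /Pilot.Defs.restrict /=; case: asboolP => // Hn.
  apply/eqP; rewrite eq_sym; apply: contraT => H0; have [_ [_ ?]] := supp_Bidx H0; exfalso; exact: Hn.
- move=> u v w _ Mv _ uv vw x; apply: DS_ext => p /=.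
  rewrite !val_mor /Pilot.Defs.restrict /=.
  rewrite val_mor /Pilot.Defs.restrict /=.
  case: asboolP => // Hu; case: asboolP => // Hv.
  apply/eqP; apply: contraT => H0; have [_ [_ Hw]] := supp_Bidx H0; exfalso; apply: Hv.
  exact: (@Bsupp_conv' _ _ _ _ Hu Hw uv vw Mv).
Qed.

Lemma esum_nat_finite' (T : choiceType) (D : set T) (g : T -> nat) :
  (\esum_(v in D) ((g v)%:R : R)%:E < +oo)%E ->
  finite_set (D `&` [set v | g v != 0%N]).
Proof. exact: (@esum_nat_finite R T D g). Qed.

Lemma Bsupp_int' {v q} : Bsupp a b v q -> intM a b q.
Proof. exact: (@Bsupp_int R a b v q). Qed.
Lemma BsuppE' (v q : pt R) : Bsupp a b v q <->
  (a <= q.1 + q.2 /\ q.1 + q.2 <= b /\ v.1 <= q.1 /\ q.1 < b - v.2 /\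
   a - v.1 < q.2 /\ q.2 <= v.2).
Proof. exact: (@BsuppE R a b v q). Qed.

Lemma relint_down (t q : pt R) : inM a b q -> t.1 < q.1 -> q.2 < t.2 ->
  relintM a b (downset a b t) q.
Proof.
move=> Mq h1 h2; split; first by split => //; split; apply: ltW.
exists (Num.min (q.1 - t.1) (t.2 - q.2)).
  by rewrite lt_min !subr_gt0 h1 h2.
move=> r Mr; rewrite !lt_min => /andP[r1 _] /andP[_ r2]; split => //; split.
  by move: r1; rewrite ltr_norml => /andP[+ _]; lra.
by move: r2; rewrite ltr_norml => /andP[_]; lra.
Qed.

Lemma FinBidx : admissible a b bet -> forall u, finite_set (Bidx a b bet u).
Proof.
move=> [_ adm] u.
have [Iu|nIu] := pselect (intM a b u); last first.
  apply: (sub_finite_set _ (finite_set0 (pt R * nat))) => p [_ [_ Hs]].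
  by apply: nIu; exact: Bsupp_int' Hs.
have Fin := esum_nat_finite' _ _ _ (adm u Iu).
apply: (sub_finite_set _ (finite_setXR Fin (fun v _ => finite_II (bet v)))).
move=> [v i] [Iv [ib Hs]] /=; split => //; split; last by move: ib; rewrite /=; case: (bet v).
have [/andP[? ?] [? [? [? [? [? ?]]]]]] : intM a b v /\ _ := conj Iv (proj1 (BsuppE' _ _) Hs).
split => //; split.
  by split; [rewrite /inM; apply/andP; split; apply: ltW | split].
apply: relint_down => /=.
- by rewrite /inM; apply/andP; split; apply: ltW.
- lra.
- lra.
Qed.

Definition delta (q : pt R * nat) : pt R * nat -> F^o :=
  fun p => if p == q then 1 else 0.

Lemma delta_sum u q : Bidx a b bet u q -> delta q \in sum_pred a b bet u.
Proof.
move=> Hq; apply/andP; split.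
  apply/asboolP; apply: (sub_finite_set _ (finite_set1 q)) => p /=.
  by rewrite /delta; have [-> //|_] := eqVneq p q; rewrite eqxx.
rewrite unfold_in; apply/asboolP => p; rewrite /delta.
by have [-> _ //|_] := eqVneq p q; rewrite eqxx.
Qed.

Lemma findim_DS u : finite_set (Bidx a b bet u) -> findim (DS u).
Proof.
move=> /finite_seqP [s0 Hs0].
pose s := undup s0.
have Hs : forall q, (q \in s) = `[< Bidx a b bet u q >].
  move=> q; rewrite mem_undup; apply/idP/asboolP.
    by move=> qs; rewrite Hs0.
  by rewrite Hs0.
pose q0 : pt R * nat := ((0, 0), 0%N).
exists (size s), (fun i => insubd (0 : DS u) (delta (nth q0 s i))).
move=> x; exists (fun i => val x (nth q0 s i)).
apply: DS_ext => p.
rewrite raddf_sum fct_sumE /=.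
have E : forall i : 'I_(size s),
    (dsval x (nth q0 s i) *: dsval (insubd (0 : DS u) (delta (nth q0 s i)))) p =
    dsval x (nth q0 s i) * delta (nth q0 s i) p.
  move=> i; rewrite insubdK //; apply: delta_sum.
  by have := mem_nth q0 (ltn_ord i); rewrite Hs => /asboolP.
rewrite (eq_bigr _ (fun i _ => E i)).
rewrite -(big_mkord xpredT (fun i => dsval x (nth q0 s i) * delta (nth q0 s i) p)).
rewrite -(big_nth q0 xpredT (fun q => dsval x q * delta q p)).
have [ps|nps] := boolP (p \in s).
  rewrite (bigD1_seq p) //= ?undup_uniq // big1 /delta ?eqxx ?mulr1 ?addr0 //.
  by move=> q qp; rewrite eq_sym (negbTE qp) mulr0.
rewrite big1_seq.
  apply/eqP; apply: contraT => H0; have HB := supp_Bidx H0.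
  by move/negP: nps => nps; exfalso; apply: nps; rewrite Hs; apply/asboolP.
move=> q /andP[_ qs]; rewrite /delta; have [pq|//] := eqVneq p q; last by rewrite mulr0.
by move: nps; rewrite pq qs.
Qed.

Lemma val0E {u} p : dsval (0 : DS u) p = 0.
Proof. by []. Qed.

Lemma DS_zero {u} (x : DS u) : (forall p, val x p = 0) -> x = 0.
Proof. by move=> H; apply: DS_ext => p; rewrite H raddf0. Qed.

Lemma val_in_sum u' u (y : DS u') :
  (forall p, val y p != 0 -> Bsupp a b p.1 u) -> val y \in sum_pred a b bet u.
Proof.
move=> H; apply/andP; split; first by apply/asboolP; exact: supp_fin.
rewrite unfold_in; apply/asboolP => p H0.
by have [? [? _]] := supp_Bidx H0; split => //; split => //; exact: H.
Qed.

Lemma cohom_ok : cohomological a b (BettiSum F a b bet).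
Proof.
split.
  move=> u Bu x; apply: DS_zero => p; apply/eqP; apply: contraT => H0.
  have [_ [_ Hs]] := supp_Bidx H0; have := Bsupp_int' Hs.
  rewrite /intM; case: Bu => ->; by rewrite ltxx ?andbF.
move=> x1 x2 y1 y2 h12 hy ha hb n y.
have G := fun p => chain_good R a b x1 x2 y1 y2 p h12 hy ha hb n.
split.
- move=> Hy0.
  have Hs : val y \in sum_pred a b bet (chainpt a b (x2, y1) (x1, y1) (x1, y2) (n + 1)).
    apply: val_in_sum => p H0.
    have [_ [_ Bp]] := supp_Bidx H0.
    have [_ G2] := G p.1; apply: G2 => // Bm.
    have := congr1 (fun z => dsval z p) Hy0; rewrite /= val_mor /Pilot.Defs.restrict /=.
    case: asboolP => // _ E; move: H0; rewrite /= E. by move/negP; apply; apply/eqP.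
  exists (insubd 0 (val y)); apply: DS_ext => p /=.
  rewrite val_mor insubdK // /Pilot.Defs.restrict; case: asboolP => // nB.
  apply/eqP; rewrite eq_sym; apply: contraT => H0.
  by have [_ [_ Bp]] := supp_Bidx H0; exfalso; apply: nB.
- move=> [x <-]; apply: DS_zero => p /=.
  rewrite !val_mor /Pilot.Defs.restrict /=.
  rewrite val_mor /Pilot.Defs.restrict /=.
  case: asboolP => // B1; case: asboolP => // B2.
  apply/eqP; apply: contraT => H0; have [_ [_ B3]] := supp_Bidx H0.
  by have [G1 _] := G p.1; exfalso; apply: G1.
Qed.

Lemma bounded_ok : admissible a b bet -> bounded_support a b (BettiSum F a b bet).
Proof.
move=> [[w [Mw Hw]] _]; exists w; split => // u Mu nuw x.
apply: DS_zero => p; apply/eqP; apply: contraT => H0.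
have [Ip [bp Bp]] := supp_Bidx H0.
have nz : bet p.1 <> 0%N by move=> E; rewrite E in bp.
have [vw1 vw2] := Hw _ Ip nz.
have [_ [_ [h1 [_ [_ h2]]]]] := proj1 (BsuppE' _ _) Bp.
by exfalso; apply: nuw; split; [apply: le_trans h1|apply: le_trans vw2].
Qed.

Lemma bij_ok : admissible a b bet -> forall u : pt R, inM a b u ->
  bijective (@sum_to_prod F R a b bet u).
Proof.
move=> adm u _; have Fin := FinBidx adm u.
have Hp : forall f : DS u, val f \in prod_pred a b bet u.
  by case=> f /= /andP[].
have Hs : forall h : DProd F a b bet u, val h \in sum_pred a b bet u.
  case=> h /= Hh; apply/andP; split => //.
  apply/asboolP; apply: (sub_finite_set _ Fin) => p /= H0.
  by move: Hh; rewrite unfold_in => /asboolP; apply.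
exists (fun h : DProd F a b bet u => insubd (0 : DS u) (val h)).
  move=> f; apply: val_inj; rewrite insubdK; last by rewrite /sum_to_prod insubdK //; exact: valP.
  by rewrite /sum_to_prod insubdK.
move=> h; apply: val_inj; rewrite /sum_to_prod insubdK; last first.
  by rewrite insubdK //; exact: valP.
by rewrite insubdK.
Qed.

Lemma zero_app (p : pt R * nat) : (0 : pt R * nat -> F^o) p = 0.
Proof. by []. Qed.

Lemma cont_ok : admissible a b bet -> seq_continuous a b (BettiSum F a b bet).
Proof.
move=> adm s u Mu Ms mono c1 c2.
have mono1 : forall k d, (s (k + d)%N).1 <= (s k).1 /\ (s k).2 <= (s (k + d)%N).2.
  move=> k; elim => [|d [IH1 IH2]]; first by rewrite addn0.
  have [m1 m2] := mono (k + d)%N; rewrite addnS.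
  by split; [exact: le_trans m1 IH1 | exact: le_trans IH2 m2].
have pleS : forall k m, (k <= m)%N -> ple (s k) (s m).
  by move=> k m km; rewrite -(subnKC km); exact: mono1.
have lb1 : forall k, u.1 <= (s k).1.
  move=> k; apply: (dec_ge c1) => n m nm; exact: (pleS n m nm).1.
have ub2 : forall k, (s k).2 <= u.2.
  move=> k; apply: (inc_le c2) => n m nm; exact: (pleS n m nm).2.
have ev : forall q : pt R, Bsupp a b q u ->
    exists N, forall k, (N <= k)%N -> Bsupp a b q (s k).
  move=> q /(BsuppE' _ _) [h1 [h2 [h3 [h4 [h5 h6]]]]].
  have [N1 HN1] := ev_lt c1 _ h4.
  have [N2 HN2] := ev_gt c2 _ h5.
  exists (maxn N1 N2) => k Nk; apply/(BsuppE' _ _).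
  have /andP[m1 m2] := Ms k.
  split => //; split => //; split; first exact: le_trans h3 (lb1 k).
  split; first by apply: HN1; apply: leq_trans Nk; exact: leq_maxl.
  split; first by apply: HN2; apply: leq_trans Nk; exact: leq_maxr.
  exact: le_trans (ub2 k) h6.
split.
  move=> x Hx; apply: DS_zero => p; apply/eqP; apply: contraT => H0.
  have [_ [_ Bp]] := supp_Bidx H0; have [N HN] := ev _ Bp.
  have := congr1 (fun z => dsval z p) (Hx N); rewrite /= val_mor /Pilot.Defs.restrict /=.
  case: asboolP => [_ E|nB]; last by exfalso; apply: nB; exact: HN.
  by move: H0; rewrite /= E zero_app eqxx.
move=> y comp.
have Y1 : forall k p, Bsupp a b p.1 (s k) -> val (y k) p = val (y k.+1) p.
  move=> k p Bk; have := congr1 (fun z => dsval z p) (comp k).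
  rewrite /= val_mor /Pilot.Defs.restrict /=.
  by case: asboolP => // _ ->.
have Y0 : forall k p, ~ Bsupp a b p.1 (s k) -> val (y k) p = 0.
  move=> k p nB; apply/eqP; apply: contraT => H0; have [_ [_ B]] := supp_Bidx H0.
  by exfalso; apply: nB.
have Yprop : forall k p, val (y k) p != 0 -> forall d, val (y (k + d)%N) p = val (y k) p.
  move=> k p H0; elim => [|d IH]; first by rewrite addn0.
  rewrite addnS -IH; symmetry; apply: Y1.
  have H1 : val (y (k + d)%N) p != 0 by rewrite IH.
  by have [_ [_ B]] := supp_Bidx H1.
have Ysupp : forall k p, Bsupp a b p.1 (s k) -> forall d, val (y k) p = val (y (k + d)%N) p.
  move=> k p Bk; elim => [|d IH]; first by rewrite addn0.
  rewrite addnS IH.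
  have [Bm|nBm] := pselect (Bsupp a b p.1 (s (k + d)%N)); first exact: Y1.
  rewrite Y0 //; apply/esym/eqP; apply: contraT => H0; have [_ [_ B]] := supp_Bidx H0.
  exfalso; apply: nBm; apply: (@Bsupp_conv' _ _ _ _ Bk B).
  - by apply: pleS; exact: leq_addr.
  - by apply: pleS.
  - exact: Ms.
pose J p := xget 0%N [set k | val (y k) p != 0].
pose xf p := val (y (J p)) p.
have Xk : forall k p, val (y k) p != 0 -> xf p = val (y k) p.
  move=> k p H0.
  have HJ : val (y (J p)) p != 0.
    by apply: (@xgetPex _ 0%N [set k | val (y k) p != 0]); exists k.
  rewrite /xf; have [jk|kj] := leqP (J p) k.
    by rewrite -(subnKC jk) (Yprop _ _ HJ).
  by rewrite -(subnKC (ltnW kj)) (Yprop _ _ H0).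
have Xgen : forall k p, Bsupp a b p.1 (s k) -> xf p = val (y k) p.
  move=> k p Bk.
  have [[j Hj]|nj] := pselect (exists j, val (y j) p != 0).
    rewrite (Xk j p Hj); have [jk|kj] := leqP j k.
      by rewrite -(subnKC jk) (Yprop _ _ Hj).
    by rewrite -(subnKC (ltnW kj)) -(Ysupp _ _ Bk).
  have Z : forall j, val (y j) p = 0.
    by move=> j; apply/eqP; apply: contraT => ?; exfalso; apply: nj; exists j.
  by rewrite /xf !Z.
have Xsupp : forall p, xf p != 0 -> Bidx a b bet u p.
  move=> p Hk.
  have [Ip [bp Bk]] := supp_Bidx Hk.
  have Ball : forall d, Bsupp a b p.1 (s (J p + d)%N).
    move=> d; have E := Yprop _ p Hk d.
    have Hkd : val (y (J p + d)%N) p != 0 by rewrite E.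
    by have [_ [_ B]] := supp_Bidx Hkd.
  split => //; split => //.
  apply/(BsuppE' _ _); have /andP[m1 m2] := Mu.
  have [_ [_ [k3 [k4 [k5 k6]]]]] := proj1 (BsuppE' _ _) Bk.
  split => //; split => //; split.
    rewrite leNgt; apply/negP => lt.
    have [N HN] := ev_lt c1 _ lt.
    have := HN (J p + N)%N (leq_addl _ _).
    have [_ [_ [h _]]] := proj1 (BsuppE' _ _) (Ball N).
    by rewrite ltNge h.
  split; first exact: le_lt_trans (lb1 _) k4.
  split; first exact: lt_le_trans k5 (ub2 _).
  rewrite leNgt; apply/negP => lt.
  have [N HN] := ev_gt c2 _ lt.
  have := HN (J p + N)%N (leq_addl _ _).
  have [_ [_ [_ [_ [_ h]]]]] := proj1 (BsuppE' _ _) (Ball N).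
  by rewrite ltNge h.
have xsum : xf \in sum_pred a b bet u.
  apply/andP; split.
    apply/asboolP; apply: (sub_finite_set _ (FinBidx adm u)) => p /=; exact: Xsupp.
  by rewrite unfold_in; apply/asboolP; exact: Xsupp.
exists (insubd (0 : DS u) xf) => k; apply: DS_ext => p /=.
rewrite val_mor insubdK // /Pilot.Defs.restrict; case: asboolP => [Bk|nB].
  exact: Xgen.
by rewrite Y0.
Qed.

End Alg.

Theorem lemma4p8 (F : fieldType) (R : realType) (a b : R)
    (bet : pt R -> nat) :
  a < b -> admissible a b bet ->
  inJ a b (BettiSum F a b bet) /\
  (forall u : pt R, inM a b u -> bijective (@sum_to_prod F R a b bet u)).
Proof.
move=> ab adm; split; last exact: (@bij_ok F R a b bet adm).
split.
- exact: (@functor_ok F R a b bet).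
- move=> u _; apply: (@findim_DS F R a b bet); exact: (@FinBidx R a b bet adm u).
- exact: (@cohom_ok F R a b bet).
- exact: (@cont_ok F R a b bet adm).
- exact: (@bounded_ok F R a b bet adm).
Qed.
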